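(* Let $(\mathcal{L},[\cdot,\cdot],\alpha)$ be a Hom-Lie algebra. For all $a(w),b(w),c(w)\in\mathcal{L}[[w,w^{-1}]]$ and $m,n\in\mathbb{Z}_{\ge0}$, the $j$-products satisfy: (1) $(\partial a)_{(n)}b=-n\,a_{(n-1)}b$ and $a_{(n)}(\partial b)=\partial(a_{(n)}b)+n\,a_{(n-1)}b$; (2) if $(a,b)$ is a local pair, then $a_{(n)}b=-\sum_{i\ge0}(-1)^{n+i}\frac{1}{i!}\partial^i(b_{(n+i)}a)$; (3) $\alpha(a)_{(m)}(b_{(n)}c)=\alpha(b)_{(n)}(a_{(m)}c)+\sum_{i=0}^m\binom{m}{i}(a_{(i)}b)_{(m+n-i)}\alpha(c)$.
   Context: A Hom-Lie algebra is a complex vector space $\mathcal{L}$ with a bilinear map $[\cdot,\cdot]$ and linear map $\alpha$ with $[x,y]=-[y,x]$ and $[[x,y],\alpha(z)]+[[y,z],\alpha(x)]+[[z,x],\alpha(y)]=0$. For $a(z)=\sum_{m\in\mathbb{Z}}a_{(m)}z^{-m-1}$ and $b(w)=\sum_n b_{(n)}w^{-n-1}$, set $[a(z),b(w)]=\sum_{m,n}[a_{(m)},b_{(n)}]z^{-m-1}w^{-n-1}$. This is local if $(z-w)^N[a(z),b(w)]=0$ for some positive integer $N$, and then $(a,b)$ is called a local pair. For $j\in\mathbb{Z}_{\ge0}$ the $j$-product is $a_{(j)}b=\mathrm{Res}_z\,(z-w)^j[a(z),b(w)]\in\mathcal{L}[[w,w^{-1}]]$, where $\mathrm{Res}_z$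 takes the coefficient of $z^{-1}$. The operator $\partial$ acts by $(\partial a)(w)=\partial_w a(w)$, and $\alpha$ acts by $\alpha(a)(w)=\sum_m\alpha(a_{(m)})w^{-m-1}$. Terms with factor $n$ and index $n-1$ are zero when $n=0$. *)

(* Defs.v *)
From HB Require Import structures.
From mathcomp Require Import all_boot all_algebra.
From mathcomp Require Export reals complex.
Set Implicit Arguments. Unset Strict Implicit. Unset Printing Implicit Defensive.
Import GRing.Theory.
Local Open Scope ring_scope.

Definition is_hom_lie (C : fieldType) (L : lmodType C)
  (br : L -> L -> L) (al : L -> L) : Prop :=
  [/\ (forall (k : C) x y z, br (k *: x + y) z = k *: br x z + br y z),
      (forall (k : C) x y z, br x (k *: y + z) = k *: br x y + br x z),
      (forall (k : C) x y, al (k *: x + y) = k *: al x + al y),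
      (forall x y, br x y = - br y x) &
      (forall x y z, br (br x y) (al z) + br (br y z) (al x)
                     + br (br z x) (al y) = 0)].

(* A formal distribution a(w) = \sum_m a_(m) w^{-m-1} in L[[w,w^{-1}]],
   represented by its mode coefficients m |-> a_(m). *)
Definition fdist (V : Type) := int -> V.

(* A two-variable formal distribution D(z,w) = \sum_{m,n} D m n z^{-m-1} w^{-n-1}. *)
Definition fdist2 (V : Type) := int -> int -> V.

Definition fbracket (V : Type) (br : V -> V -> V) (a b : fdist V) : fdist2 V :=
  fun m n => br (a m) (b n).

(* multiplication by (z - w): coefficient of z^{-m-1} w^{-n-1} in (z-w) D
   is D (m+1) n - D m (n+1). *)
Definition mul_zw (V : zmodType) (D : fdist2 V) : fdist2 V :=
  fun m n => D (m + 1) n - D m (n + 1).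

Definition mul_zw_pow (V : zmodType) (j : nat) (D : fdist2 V) : fdist2 V :=
  iter j (@mul_zw V) D.

(* Res_z : coefficient of z^{-1}, i.e. the mode m = 0 in z. *)
Definition resz (V : Type) (D : fdist2 V) : fdist V := fun n => D 0 n.

Definition jprod (V : zmodType) (br : V -> V -> V) (j : nat) (a b : fdist V)
  : fdist V := resz (mul_zw_pow j (fbracket br a b)).

Definition local_pair (V : zmodType) (br : V -> V -> V) (a b : fdist V) : Prop :=
  exists N : nat, (0 < N)%N /\ mul_zw_pow N (fbracket br a b) = (fun _ _ => 0).

(* (\partial a)(w) = \partial_w a(w).  Since
   \partial_w \sum_m a_(m) w^{-m-1} = \sum_m (-m-1) a_(m) w^{-m-2},
   the coefficient of w^{-m-1} is -m a_(m-1). *)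
Definition fderiv (V : zmodType) (a : fdist V) : fdist V :=
  fun m => a (m - 1) *~ (- m).

Definition falpha (V : Type) (al : V -> V) (a : fdist V) : fdist V :=
  fun m => al (a m).

(* Main.v *)
Require Import Defs.
From HB Require Import structures.
From mathcomp Require Import all_boot all_algebra.
From mathcomp Require Import reals complex.
From Stdlib Require Import FunctionalExtensionality.
From mathcomp Require Import zify ring.
Import GRing.Theory Num.Theory.
Local Open Scope ring_scope.

Lemma subrACA' (V : zmodType) (a b c d : V) : (a - b) - (c - d) = (a - c) - (b - d).
Proof. by rewrite !opprB addrACA [RHS]addrACA [- c + _]addrC. Qed.

Section Two.
Context {V : zmodType}.
Implicit Types (F : fdist2 V).

Lemma mzpS j F m n : mul_zw_pow j.+1 F m n
  = mul_zw_pow j F (m + 1) n - mul_zw_pow j F m (n + 1).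
Proof. by []. Qed.

Lemma mzp_zero F : (forall m n, F m n = 0) -> forall j m n, mul_zw_pow j F m n = 0.
Proof. move=> H; elim=> [|j IH] m n; first exact: H. by rewrite mzpS !IH subrr. Qed.

Definition dz F : fdist2 V := fun m n => F (m - 1) n *~ (- m).
Definition dw F : fdist2 V := fun m n => F m (n - 1) *~ (- n).

Lemma mz_dz F m n : mul_zw (dz F) m n = dz (mul_zw F) m n - F m n.
Proof.
rewrite /mul_zw /dz addrK subrK mulrzBl opprD mulrzDr mulrN1z.
by rewrite addrAC.
Qed.

Lemma mzp_dz j F m n : mul_zw_pow j.+1 (dz F) m n
   = dz (mul_zw_pow j.+1 F) m n - mul_zw_pow j F m n *+ j.+1.
Proof.
elim: j m n => [|j IH] m n; first by rewrite mulr1n; exact: mz_dz.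
rewrite mzpS !IH subrACA' -mulrnBl -mzpS.
rewrite -[dz _ (m + 1) n - _]/(mul_zw (dz (mul_zw_pow j.+1 F)) m n) mz_dz.
by rewrite [_ *+ j.+2]mulrS [in RHS]opprD [in RHS]addrA.
Qed.

Lemma mz_dw F m n : mul_zw (dw F) m n = dw (mul_zw F) m n + F m n.
Proof.
rewrite /mul_zw /dw addrK subrK mulrzBl opprD mulrzDr mulrN1z.
by rewrite opprB addrA addrAC.
Qed.

Lemma mzp_dw j F m n : mul_zw_pow j.+1 (dw F) m n
   = dw (mul_zw_pow j.+1 F) m n + mul_zw_pow j F m n *+ j.+1.
Proof.
elim: j m n => [|j IH] m n; first by rewrite mulr1n; exact: mz_dw.
rewrite mzpS !IH opprD addrACA -mulrnBl -mzpS.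
rewrite -[dw _ (m + 1) n - _]/(mul_zw (dw (mul_zw_pow j.+1 F)) m n) mz_dw.
by rewrite [_ *+ j.+2]mulrS [in RHS]addrA.
Qed.

Lemma mzp_swap j F m n :
  mul_zw_pow j (fun m n => - F n m) m n = - (mul_zw_pow j F n m *~ ((-1) ^+ j)).
Proof.
elim: j m n => [|j IH] m n; first by rewrite expr0 mulr1z.
rewrite mzpS !IH mzpS exprS mulrzA mulrN1z opprB mulrzBl opprB opprK.
by rewrite addrC.
Qed.

End Two.

Definition fd3 (V : Type) := int -> int -> int -> V.

Section Three.
Context {V : zmodType}.
Implicit Types (F H X Y : fd3 V).

Definition M1 F : fd3 V := fun p q r => F (p + 1) q r - F p q (r + 1).
Definition M2 F : fd3 V := fun p q r => F p (q + 1) r - F p q (r + 1).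
Definition Zo F : fd3 V := fun p q r => F (p + 1) q r - F p (q + 1) r.
Definition swap3 F : fd3 V := fun p q r => F q p r.
Definition add3 X Y : fd3 V := fun p q r => X p q r + Y p q r.

Lemma iter_comm (T : Type) (f g : T -> T) : (forall x, f (g x) = g (f x)) ->
  forall m n x, iter m f (iter n g x) = iter n g (iter m f x).
Proof.
move=> fg.
have h : forall n x, f (iter n g x) = iter n g (f x).
  by elim=> [|n IH] x //=; rewrite fg IH.
elim=> [|m IH] n x //=.
by rewrite IH h.
Qed.

Lemma iter_add (Op : fd3 V -> fd3 V) :
  (forall X Y, Op (add3 X Y) = add3 (Op X) (Op Y)) ->
  forall n X Y, iter n Op (add3 X Y) = add3 (iter n Op X) (iter n Op Y).
Proof. by move=> h; elim=> [|n IH] X Y //=; rewrite IH h. Qed.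

Lemma M1_add X Y : M1 (add3 X Y) = add3 (M1 X) (M1 Y).
Proof.
apply: functional_extensionality => p; apply: functional_extensionality => q;
apply: functional_extensionality => r.
by rewrite /M1 /add3 opprD addrACA.
Qed.

Lemma M2_add X Y : M2 (add3 X Y) = add3 (M2 X) (M2 Y).
Proof.
apply: functional_extensionality => p; apply: functional_extensionality => q;
apply: functional_extensionality => r.
by rewrite /M2 /add3 opprD addrACA.
Qed.

Lemma M1M2 X : M1 (M2 X) = M2 (M1 X).
Proof.
apply: functional_extensionality => p; apply: functional_extensionality => q;
apply: functional_extensionality => r.
by rewrite /M1 /M2 subrACA'.
Qed.

Lemma ZoM2 X : Zo (M2 X) = M2 (Zo X).
Proof.
apply: functional_extensionality => p; apply: functional_extensionality => q;
apply: functional_extensionality => r.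
by rewrite /Zo /M2 subrACA'.
Qed.

Lemma M2_iterZo i X : M2 (iter i Zo X) = iter i Zo (M2 X).
Proof. by elim: i => [|i IH] //=; rewrite -ZoM2 IH. Qed.

Lemma M1_split X : M1 X = add3 (Zo X) (M2 X).
Proof.
apply: functional_extensionality => p; apply: functional_extensionality => q;
apply: functional_extensionality => r.
by rewrite /M1 /Zo /M2 /add3 addrA subrK.
Qed.

Lemma iterM1_swap n X : iter n M1 (swap3 X) = swap3 (iter n M2 X).
Proof. by elim: n => [|n IH] //=; rewrite IH. Qed.

Lemma iterM2_swap n X : iter n M2 (swap3 X) = swap3 (iter n M1 X).
Proof. by elim: n => [|n IH] //=; rewrite IH. Qed.

Lemma Zo_sum K (F : 'I_K -> fd3 V) (c : 'I_K -> nat) :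
  Zo (fun p q r => \sum_(i < K) F i p q r *+ c i)
  = fun p q r => \sum_(i < K) Zo (F i) p q r *+ c i.
Proof.
apply: functional_extensionality => p; apply: functional_extensionality => q;
apply: functional_extensionality => r.
by rewrite /Zo -sumrB; apply: eq_bigr => i _; rewrite mulrnBl.
Qed.

Lemma M2_sum K (F : 'I_K -> fd3 V) (c : 'I_K -> nat) :
  M2 (fun p q r => \sum_(i < K) F i p q r *+ c i)
  = fun p q r => \sum_(i < K) M2 (F i) p q r *+ c i.
Proof.
apply: functional_extensionality => p; apply: functional_extensionality => q;
apply: functional_extensionality => r.
by rewrite /M2 -sumrB; apply: eq_bigr => i _; rewrite mulrnBl.
Qed.

Lemma binom_ops m H :
  iter m M1 H = fun p q r =>
    \sum_(i < m.+1) iter i Zo (iter (m - i) M2 H) p q r *+ 'C(m, i).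
Proof.
elim: m => [|m IH].
  apply: functional_extensionality => p; apply: functional_extensionality => q;
  apply: functional_extensionality => r.
  by rewrite big_ord1 /= mulr1n.
rewrite iterS IH M1_split /add3 Zo_sum M2_sum.
apply: functional_extensionality => p; apply: functional_extensionality => q;
apply: functional_extensionality => r.
have eM2 : forall i : 'I_m.+1, M2 (iter i Zo (iter (m - i) M2 H))
   = iter i Zo (iter (m.+1 - i) M2 H).
    by move=> i; rewrite M2_iterZo subSn // -ltnS.
under [X in _ + X = _]eq_bigr => i _ do rewrite eM2.
rewrite [in RHS]big_ord_recl.
under [in RHS]eq_bigr => i _ do rewrite binS mulrnDr.
rewrite [in RHS]big_split /=.
rewrite [X in _ = _ + (X + _)]big_ord_recr /=.
rewrite [X in _ + X = _]big_ord_recl /=.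
rewrite (bin_small (ltnSn m)) mulr0n addr0.
rewrite addrCA [X in _ + X = _]addrC !bin0; congr (_ + (_ + _)); apply: eq_bigr => i _; reflexivity.
Qed.

Lemma Link1 (phi : int -> V -> V)
  (hphi : forall p x y, phi p (x - y) = phi p x - phi p y) (F : fdist2 V) n :
  iter n M2 (fun p q r => phi p (F q r)) = fun p q r => phi p (mul_zw_pow n F q r).
Proof.
elim: n => [|n IH] //=; rewrite IH.
apply: functional_extensionality => p; apply: functional_extensionality => q;
apply: functional_extensionality => r.
by rewrite /M2 -hphi.
Qed.

Lemma Link3 (psi : int -> V -> V)
  (hpsi : forall r x y, psi r (x - y) = psi r x - psi r y) (F : fdist2 V) n :
  iter n Zo (fun p q r => psi r (F p q)) = fun p q r => psi r (mul_zw_pow n F p q).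
Proof.
elim: n => [|n IH] //=; rewrite IH.
apply: functional_extensionality => p; apply: functional_extensionality => q;
apply: functional_extensionality => r.
by rewrite /Zo -hpsi.
Qed.

Lemma Link2a H q0 m :
  mul_zw_pow m (fun p r => H p q0 r) = fun p r => iter m M1 H p q0 r.
Proof.
elim: m => [|m IH] //.
rewrite [LHS]/mul_zw_pow iterS -/(mul_zw_pow m _) IH //.
Qed.

Lemma Link2b H p0 m :
  mul_zw_pow m (fun q r => H p0 q r) = fun q r => iter m M2 H p0 q r.
Proof.
elim: m => [|m IH] //.
rewrite [LHS]/mul_zw_pow iterS -/(mul_zw_pow m _) IH //.
Qed.

End Three.

Definition ff (k : int) (i : nat) : int := \prod_(r < i) (k - r%:Z).

Lemma ffS_r k i : ff k i.+1 = ff k i * (k - i%:Z).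
Proof. by rewrite /ff big_ord_recr. Qed.

Lemma ffS_l k i : ff k i.+1 = k * ff (k - 1) i.
Proof.
rewrite /ff big_ord_recl subr0; congr (_ * _); apply: eq_bigr => r _.
rewrite lift0; lia.
Qed.

Lemma ff0 k : ff k 0 = 1.
Proof. by rewrite /ff big_ord0. Qed.

Section Bin.
Context {R : realType} {L : lmodType R[i]}.

Definition bin (k : int) (i : nat) : R[i] := (ff k i)%:~R / (i`!)%:R.

Lemma bin0' k : bin k 0 = 1.
Proof. by rewrite /bin ff0 fact0 divr1. Qed.

Lemma bin0S i : bin 0 i.+1 = 0.
Proof. by rewrite /bin ffS_l mul0r mul0r. Qed.

Lemma binS' k i : bin (k + 1) i.+1 = bin k i.+1 + bin k i.
Proof.
rewrite /bin ffS_l addrK ffS_r factS natrM !intrM.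
rewrite (intrD _ k 1) (intrB _ k i).
have h1 : (i.+1)%:R != 0 :> R[i] by rewrite pnatr_eq0.
have h2 : (i`!)%:R != 0 :> R[i] by rewrite pnatr_eq0 -lt0n fact_gt0.
have e : (i.+1)%:R = (i%:Z)%:~R + 1 :> R[i] by rewrite -addn1 natrD.
rewrite e in h1 *.
field; rewrite ?h1 ?h2 //.
Qed.

Lemma iter_fd (f : fdist L) i k :
  iter i (@fderiv L) f k = f (k - i%:Z) *~ ((-1) ^+ i * ff k i).
Proof.
elim: i k => [|i IH] k; first by rewrite subr0 expr0 ff0 mulr1 mulr1z.
rewrite iterS {1}/fderiv IH -mulrzA ffS_l.
have -> : k - 1 - i%:Z = k - (i.+1)%:Z by lia.
by congr (_ *~ _); rewrite exprS; ring.
Qed.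

Lemma tele (k : int) (e f : nat -> L) : (forall i, e i = f i - f i.+1) -> forall M,
  \sum_(i < M.+1) ((-1) ^+ i * bin (k + 1) i) *: f i
  - \sum_(i < M.+1) ((-1) ^+ i * bin k i) *: e i
  = ((-1) ^+ M * bin k M) *: f M.+1.
Proof.
move=> he; elim=> [|M IH].
  by rewrite !big_ord1 !bin0' !expr0 !mulr1 !scale1r he opprB addrC subrK.
rewrite big_ord_recr [X in _ - X]big_ord_recr /= opprD addrACA IH he binS'.
rewrite scalerBr opprB.
set c0 := (-1) ^+ M * bin k M.
set s := (-1) ^+ M.+1.
have hs : s = - (-1) ^+ M by rewrite /s exprS mulN1r.
rewrite addrCA !addrA addrAC -scalerDl -scalerBl.
have -> : s * (bin k M.+1 + bin k M) + c0 - s * bin k M.+1 = 0.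
  by rewrite /c0 hs; ring.
by rewrite scale0r add0r.
Qed.

Lemma Xstep (D : fdist2 L) n N
  (hN : forall j m q, (N <= j)%N -> mul_zw_pow j D m q = 0) (T k : int) :
  \sum_(i < N.+1) ((-1) ^+ i * bin (k + 1) i) *: mul_zw_pow (n + i) D (k + 1 - i%:Z) (T - (k + 1))
  = \sum_(i < N.+1) ((-1) ^+ i * bin k i) *: mul_zw_pow (n + i) D (k - i%:Z) (T - k).
Proof.
apply/eqP; rewrite -subr_eq0; apply/eqP.
have he : forall i, (fun i => mul_zw_pow (n + i) D (k - i%:Z) (T - k)) i
   = (fun i => mul_zw_pow (n + i) D (k + 1 - i%:Z) (T - (k + 1))) i
   - (fun i => mul_zw_pow (n + i) D (k + 1 - i%:Z) (T - (k + 1))) i.+1.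
  move=> i /=; rewrite addnS mzpS.
  have -> : k + 1 - (i.+1)%:Z + 1 = k + 1 - i%:Z by lia.
  have -> : k + 1 - (i.+1)%:Z = k - i%:Z by lia.
  have -> : T - (k + 1) + 1 = T - k by lia.
  by rewrite opprB addrCA subrr addr0.
rewrite (tele k (fun i => mul_zw_pow (n + i) D (k - i%:Z) (T - k))
   (fun i => mul_zw_pow (n + i) D (k + 1 - i%:Z) (T - (k + 1))) he N) hN ?scaler0 //; lia.
Qed.

Lemma Xzero (D : fdist2 L) n N (T : int) :
  \sum_(i < N.+1) ((-1) ^+ i * bin 0 i) *: mul_zw_pow (n + i) D (0 - i%:Z) (T - 0)
  = mul_zw_pow n D 0 T.
Proof.
rewrite big_ord_recl big1 ?addr0.
  by rewrite expr0 bin0' mulr1 scale1r addn0.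
by move=> i _; rewrite lift0 bin0S mulr0 scale0r.
Qed.

End Bin.

Lemma int_const (T : Type) (g : int -> T) : (forall k, g (k + 1) = g k) -> forall k, g k = g 0.
Proof.
move=> h; case=> p; elim: p => [|p IH] //.
- have -> : Posz p.+1 = Posz p + 1 by lia.
  by rewrite h.
- have e : Negz 0 + 1 = 0 by lia.
  by rewrite -(h (Negz 0)) e.
- have e : Negz p.+1 + 1 = Negz p by lia.
  by rewrite -(h (Negz p.+1)) e.
Qed.

Section Lie.
Context {R : realType} {L : lmodType R[i]} (br : L -> L -> L) (al : L -> L).
Hypothesis H1 : forall (k : R[i]) x y z, br (k *: x + y) z = k *: br x z + br y z.
Hypothesis H2 : forall (k : R[i]) x y z, br x (k *: y + z) = k *: br x y + br x z.
Hypothesis H4 : forall x y, br x y = - br y x.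
Hypothesis H5 : forall x y z, br (br x y) (al z) + br (br y z) (al x)
                     + br (br z x) (al y) = 0.

Lemma br0r x : br x 0 = 0.
Proof.
have h := H2 1 x 0 0; rewrite scale1r addr0 scale1r in h.
by apply: (@addrI _ (br x 0)); rewrite addr0 -h.
Qed.

Lemma br0l x : br 0 x = 0.
Proof.
have h := H1 1 0 0 x; rewrite scale1r addr0 scale1r in h.
by apply: (@addrI _ (br 0 x)); rewrite addr0 -h.
Qed.

Lemma brNr x y : br x (- y) = - br x y.
Proof. by have := H2 (-1) x y 0; rewrite addr0 br0r addr0 !scaleN1r. Qed.

Lemma brBr x y z : br x (y - z) = br x y - br x z.
Proof. by have := H2 1 x y (- z); rewrite !scale1r brNr. Qed.

Lemma brNl x y : br (- x) y = - br x y.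
Proof. by have := H1 (-1) x 0 y; rewrite addr0 br0l addr0 !scaleN1r. Qed.

Lemma brBl x y z : br (x - y) z = br x z - br y z.
Proof. by have := H1 1 x (- y) z; rewrite !scale1r brNl. Qed.

Lemma br_intl x y (z : int) : br (x *~ z) y = br x y *~ z.
Proof. by rewrite -[x *~ z]scaler_int -[br x y *~ z]scaler_int -[_ *: x]addr0 H1 br0l addr0. Qed.

Lemma br_intr x y (z : int) : br x (y *~ z) = br x y *~ z.
Proof. by rewrite -[y *~ z]scaler_int -[br x y *~ z]scaler_int -[_ *: y]addr0 H2 br0r addr0. Qed.

Lemma part1a (a b : fdist L) (n : nat) (k : int) :
  jprod br n (fderiv a) b k = - (jprod br n.-1 a b k *+ n).
Proof.
have eF : fbracket br (fderiv a) b = dz (fbracket br a b).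
  apply: functional_extensionality => m; apply: functional_extensionality => q.
  by rewrite /fbracket /fderiv /dz br_intl.
rewrite /jprod /resz eF; case: n => [|j].
  by rewrite mulr0n oppr0 /= /dz oppr0 mulr0z.
by rewrite mzp_dz {1}/dz oppr0 mulr0z sub0r.
Qed.

Lemma part1b (a b : fdist L) (n : nat) (k : int) :
  jprod br n a (fderiv b) k = fderiv (jprod br n a b) k + jprod br n.-1 a b k *+ n.
Proof.
have eF : fbracket br a (fderiv b) = dw (fbracket br a b).
  apply: functional_extensionality => m; apply: functional_extensionality => q.
  by rewrite /fbracket /fderiv /dw br_intr.
case: n => [|j].
  by rewrite mulr0n addr0 /jprod /resz eF.
by rewrite /jprod /resz eF mzp_dw.
Qed.

Lemma part2 (a b : fdist L) : local_pair br a b ->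
    forall n : nat,
    exists M : nat,
      (forall i : nat, (M <= i)%N ->
         forall k, iter i (@fderiv L) (jprod br (n + i) b a) k = 0) /\
      (forall k : int,
         jprod br n a b k
         = - \sum_(i < M)
               (((-1) ^+ (n + i) / (i`!)%:R : R[i])
                  *: iter i (@fderiv L) (jprod br (n + i) b a) k)).
Proof.
move=> [N [N0 hloc]] n; exists N.+1.
set D := fbracket br a b.
have hz : forall j m q, (N <= j)%N -> mul_zw_pow j D m q = 0.
  move=> j m q hj; rewrite -(subnK hj) /mul_zw_pow iterD -/(mul_zw_pow N D) hloc.
  by apply: mzp_zero.
have hba : forall j k', jprod br j b a k' = - (mul_zw_pow j D k' 0 *~ ((-1) ^+ j)).
  move=> j k'; rewrite /jprod /resz.
  have -> : fbracket br b a = (fun m n => - D n m).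
    apply: functional_extensionality => m; apply: functional_extensionality => q.
    by rewrite /D /fbracket H4.
  exact: mzp_swap.
split.
  move=> i hi k; rewrite iter_fd hba hz ?mul0rz ?oppr0 ?mul0rz //; lia.
move=> k.
have eterm : forall i : 'I_N.+1,
   ((-1) ^+ (n + i) / (i`!)%:R : R[i]) *: iter i (@fderiv L) (jprod br (n + i) b a) k
   = - (((-1) ^+ i * bin k i) *: mul_zw_pow (n + i) D (k - i%:Z) (k - k)).
  move=> i; rewrite iter_fd hba subrr mulNrz scalerN; congr (- _).
  rewrite -(scaler_int ((-1) ^+ (n + i))) -scaler_int !scalerA; congr (_ *: _).
  rewrite !intrM !intr_sign /bin.
  set u := (-1) ^+ (n + i) : R[i].
  have uu : u * u = 1 by rewrite /u -exprD addnn -mul2n exprM sqrrN expr1n expr1n.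
  transitivity ((u * u) * ((-1) ^+ i * ((ff k i)%:~R / (i`!)%:R))); first by ring.
  by rewrite uu mul1r.
rewrite /jprod /resz -/D (eq_bigr _ (fun i _ => eterm i)) sumrN opprK.
have := int_const _ (fun x => \sum_(i < N.+1) ((-1) ^+ i * bin x i) *:
           mul_zw_pow (n + i) D (x - i%:Z) (k - x)) (fun x => Xstep D n N hz k x) k.
by move=> /= ->; rewrite Xzero.
Qed.

Lemma L1gen (x y z : fdist L) m n k :
  jprod br m (falpha al x) (jprod br n y z) k
  = iter m M1 (iter n M2 (fun p q r => br (al (x p)) (br (y q) (z r)))) 0 0 k.
Proof.
rewrite {1}/jprod /resz.
have e : fbracket br (falpha al x) (jprod br n y z)
   = fun p r => iter n M2 (fun p q r => br (al (x p)) (br (y q) (z r))) p 0 r.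
  apply: functional_extensionality => p; apply: functional_extensionality => r.
  rewrite (Link1 (fun p => br (al (x p))) _ (fbracket br y z) n) //.
  by move=> p' u v; rewrite brBr.
by rewrite e (Link2a _ 0 m).
Qed.

Lemma L3gen (x y z : fdist L) i j k :
  jprod br j (jprod br i x y) (falpha al z) k
  = iter j M2 (iter i Zo (fun p q r => br (br (x p) (y q)) (al (z r)))) 0 0 k.
Proof.
rewrite {1}/jprod /resz.
have e : fbracket br (jprod br i x y) (falpha al z)
   = fun q r => iter i Zo (fun p q r => br (br (x p) (y q)) (al (z r))) 0 q r.
  apply: functional_extensionality => q; apply: functional_extensionality => r.
  rewrite (Link3 (fun r v => br v (al (z r))) _ (fbracket br x y) i) //.
  by move=> r' u v; rewrite brBl.
by rewrite e (Link2b _ 0 j).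
Qed.

Lemma jac x y z : br (al x) (br y z) = br (al y) (br x z) + br (br x y) (al z).
Proof.
have h := H5 x y z.
rewrite (H4 (br y z)) (H4 (br z x)) (H4 z x) brNr opprK in h.
move/eqP: h; rewrite addrAC subr_eq0 => /eqP <-.
by rewrite addrC.
Qed.

Lemma part3 (a b c : fdist L) (m n : nat) (k : int) :
      jprod br m (falpha al a) (jprod br n b c) k
      = jprod br n (falpha al b) (jprod br m a c) k
        + \sum_(i < m.+1)
            (jprod br (m + n - i) (jprod br i a b) (falpha al c) k *+ 'C(m, i)).
Proof.
rewrite L1gen (L1gen b a c n m).
set U := fun p q r => br (al (b q)) (br (a p) (c r)).
set W := fun p q r => br (br (a p) (b q)) (al (c r)).
have -> : (fun p q r => br (al (a p)) (br (b q) (c r))) = add3 U W.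
  apply: functional_extensionality => p; apply: functional_extensionality => q;
  apply: functional_extensionality => r.
  by rewrite /add3 /U /W jac.
have -> : (fun p q r => br (al (b p)) (br (a q) (c r))) = swap3 U by [].
rewrite (iter_add _ M2_add) (iter_add _ M1_add) /add3.
rewrite iterM2_swap iterM1_swap /swap3 -(iter_comm _ _ _ M1M2).
congr (_ + _).
rewrite binom_ops; apply: eq_bigr => i _; rewrite L3gen; congr (_ *+ _).
rewrite -iterD (iter_comm _ _ _ ZoM2) addnBAC //.
by rewrite -ltnS.
Qed.

End Lie.

Theorem proposition4p7 (R : realType) (L : lmodType R[i])
  (br : L -> L -> L) (al : L -> L) :
  is_hom_lie br al ->
  (* (1) *)
  (forall (a b : fdist L) (n : nat) (k : int),
      jprod br n (fderiv a) b k = - (jprod br n.-1 a b k *+ n)) /\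
  (forall (a b : fdist L) (n : nat) (k : int),
      jprod br n a (fderiv b) k
      = fderiv (jprod br n a b) k + jprod br n.-1 a b k *+ n) /\
  (* (2) : the sum over i >= 0 has only finitely many nonzero terms *)
  (forall (a b : fdist L), local_pair br a b ->
    forall n : nat,
    exists M : nat,
      (forall i : nat, (M <= i)%N ->
         forall k, iter i (@fderiv L) (jprod br (n + i) b a) k = 0) /\
      (forall k : int,
         jprod br n a b k
         = - \sum_(i < M)
               (((-1) ^+ (n + i) / (i`!)%:R : R[i])
                  *: iter i (@fderiv L) (jprod br (n + i) b a) k))) /\
  (* (3) *)
  (forall (a b c : fdist L) (m n : nat) (k : int),
      jprod br m (falpha al a) (jprod br n b c) k
      = jprod br n (falpha al b) (jprod br m a c) k
        + \sum_(i < m.+1)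
            (jprod br (m + n - i) (jprod br i a b) (falpha al c) k *+ 'C(m, i))).
Proof.
case=> H1 H2 H3 H4 H5.
split; first by move=> a b n k; apply: part1a.
split; first by move=> a b n k; apply: part1b.
split; first by move=> a b hab n; apply: part2.
by move=> a b c m n k; apply: part3.
Qed.
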